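(* Let $k\ge 4$ and let $f,\tilde f$ be CNF formulas whose literal-clause graphs with negation connections $\mathrm{LCN}(f)$ and $\mathrm{LCN}(\tilde f)$ are indistinguishable by the $k$-WL test. Then for every partial assignment $\sigma$ of the variables of $f$ that sets at most $\lfloor k/2\rfloor-1$ variables, there exists a partial assignment $\tilde\sigma$ of the variables of $\tilde f$ such that $\mathrm{LCN}(\sigma(f))$ and $\mathrm{LCN}(\tilde\sigma(\tilde f))$ are indistinguishable by the (1-dimensional) WL test.
   Context: Literals, clauses (sets of literals, read as disjunctions) and CNF formulas (sets of clauses, read as conjunctions) are as usual. For a CNF formula $f$ on variables $x_1,\dots,x_n$, $\mathrm{LCN}(f)$ is the edge-colored graph whose vertices are the $2n$ literals $x_i,\neg x_i$ and one vertex per clause, with a ''literal-clause'' colored edge $\{\ell,c\}$ whenever $\ell\in c$ and a differently colored ''literal-literal'' edge $\{x_i,\neg x_i\}$ for each $i$; vertices carry no labels. For a partial assignment $\sigma$, $\mathrm{LCN}(\sigma(f))$ is $\mathrm{LCN}(f)$ in which each literal vertex set to true by $\sigma$ receives the vertex label $\top$, each literal set to false receives the label $\bot$, and all other vertices carry a common default label. WL test (with vertex and edge colors): $\chi^0$ is the vertex labeling; $\chi^\ell(v)=(\chi^{\ell-1}(v),(\{\!\{\chi^{\ell-1}(w):w\in N_c(v)\}\!\})_{c})$, where $N_c(v)$ is the set of neighbors of $v$ via edges of color $c$, iterated until the partition stabilizes; it is run on the disjoint union of two graphs, and they are distinguished iff some color occurs a different number of times among the vertices of the two graphs. $k$-WL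 test: the atomic type of $\bar v\in V(G)^k$ is determined by the colored induced subgraph on its entries (tuples have equal type iff $v_i\mapsto u_i$ is an isomorphism of the colored induced subgraphs); $\chi^0(\bar v)$ is the atomic type and $\chi^\ell(\bar v)=(\chi^{\ell-1}(\bar v),\chi^{\ell-1}_1(\bar v),\dots,\chi^{\ell-1}_k(\bar v))$ with $\chi^{\ell-1}_i(\bar v)=\{\!\{\chi^{\ell-1}(v_1,..,v_{i-1},u,v_{i+1},..,v_k):u\in V\}\!\}$, until stable; run on the disjoint union, two graphs are distinguished iff some color class has different numbers of tuples from the two graphs. *)

(* Defs.v *)
From mathcomp Require Import all_boot.
Set Implicit Arguments. Unset Strict Implicit. Unset Printing Implicit Defensive.

Record cgraph (C : finType) := CGraph {
  vert : finType;
  vlab : vert -> nat;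
  edge : C -> rel vert }.

Definition gunion (C : finType) (G1 G2 : cgraph C) : cgraph C :=
  @CGraph C (vert G1 + vert G2)%type
    (fun v => match v with inl x => vlab x | inr y => vlab y end)
    (fun c v w => match v, w with
                  | inl x, inl y => @edge C G1 c x y
                  | inr x, inr y => @edge C G2 c x y
                  | _, _ => false end).

(* 1-WL (colour refinement).  [wl_eq G l v w] holds iff chi^l(v) = chi^l(w). *)
(* chi^{l+1}(v) = (chi^l(v), (multiset of chi^l over N_c(v))_c); two          *)
(* multisets of colours agree iff for every colour class (represented by u)   *)
(* the numbers of elements in that class agree.                              *)
Fixpoint wl_eq (C : finType) (G : cgraph C) (l : nat) : rel (vert G) :=
  match l with
  | 0 => fun v w => vlab v == vlab w
  | l'.+1 => fun v w =>
      @wl_eq C G l' v w &&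
      [forall c : C, forall u : vert G,
         #|[set x | @edge C G c v x & @wl_eq C G l' x u]|
         == #|[set x | @edge C G c w x & @wl_eq C G l' x u]|]
  end.

Definition wl_stable (C : finType) (G : cgraph C) (l : nat) : Prop :=
  forall v w : vert G, @wl_eq C G l v w = @wl_eq C G l.+1 v w.

Definition wl_distinguished (C : finType) (G1 G2 : cgraph C) : Prop :=
  exists l, wl_stable (gunion G1 G2) l /\
    exists u : vert (gunion G1 G2),
      #|[set x : vert G1 | @wl_eq C (gunion G1 G2) l (inl x) u]|
      != #|[set y : vert G2 | @wl_eq C (gunion G1 G2) l (inr y) u]|.

Definition ktuple (k : nat) (V : finType) := {ffun 'I_k -> V}.

Definition tsubst (k : nat) (V : finType) (t : ktuple k V) (i : 'I_k) (x : V)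
  : ktuple k V := [ffun j => if j == i then x else t j].

(* equal atomic types: v_i |-> u_i is an isomorphism of the coloured induced *)
(* subgraphs (well defined and injective, preserves labels and edge colours) *)
Definition atp_eq (C : finType) (G : cgraph C) (k : nat)
  (t s : ktuple k (vert G)) : bool :=
  [forall i, forall j,
     ((t i == t j) == (s i == s j)) &&
     (vlab (t i) == vlab (s i)) &&
     [forall c : C, @edge C G c (t i) (t j) == @edge C G c (s i) (s j)]].

Fixpoint kwl_eq (C : finType) (G : cgraph C) (k : nat) (l : nat)
  : rel (ktuple k (vert G)) :=
  match l with
  | 0 => fun t s => atp_eq t s
  | l'.+1 => fun t s =>
      @kwl_eq C G k l' t s &&
      [forall i : 'I_k, forall u : ktuple k (vert G),
         #|[set x | @kwl_eq C G k l' (tsubst t i x) u]|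
         == #|[set x | @kwl_eq C G k l' (tsubst s i x) u]|]
  end.

Definition kwl_stable (C : finType) (G : cgraph C) (k l : nat) : Prop :=
  forall t s : ktuple k (vert G), @kwl_eq C G k l t s = @kwl_eq C G k l.+1 t s.

Definition inl_tuple (k : nat) (V1 V2 : finType) (t : ktuple k V1)
  : ktuple k (V1 + V2)%type := [ffun i => inl (t i)].
Definition inr_tuple (k : nat) (V1 V2 : finType) (t : ktuple k V2)
  : ktuple k (V1 + V2)%type := [ffun i => inr (t i)].

Definition kwl_distinguished (C : finType) (k : nat) (G1 G2 : cgraph C) : Prop :=
  exists l, kwl_stable (gunion G1 G2) k l /\
    exists u : ktuple k (vert (gunion G1 G2)),
      #|[set t : ktuple k (vert G1) |
          @kwl_eq C (gunion G1 G2) k l (inl_tuple (vert G2) t) u]|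
      != #|[set t : ktuple k (vert G2) |
          @kwl_eq C (gunion G1 G2) k l (inr_tuple (vert G1) t) u]|.

(* Literal (i, true) is x_i, literal (i, false) is the negation of x_i.      *)
Definition lit (n : nat) := ('I_n * bool)%type.
Definition clause (n : nat) := {set lit n}.
Definition cnf (n : nat) := {set clause n}.

(* partial assignment: None = unset *)
Definition passign (n : nat) := {ffun 'I_n -> option bool}.

Definition assigned (n : nat) (s : passign n) : {set 'I_n} :=
  [set i | s i != None].

Definition lcn_vert (n : nat) (f : cnf n) : finType :=
  (lit n + {c : clause n | c \in f})%type.

(* edge colour true: literal-clause; false: literal-literal *)
Definition lcn_edge (n : nat) (f : cnf n) (c : bool) : rel (lcn_vert f) :=
  fun v w =>
    match v, w with
    | inl l, inr cl => c && (l \in val cl)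
    | inr cl, inl l => c && (l \in val cl)
    | inl (i, b), inl (j, b') => ~~ c && (i == j) && (b != b')
    | _, _ => false
    end.

Definition lab_default := 0.
Definition lab_top := 1.
Definition lab_bot := 2.

Definition lcn_lab (n : nat) (f : cnf n) (s : passign n) (v : lcn_vert f) : nat :=
  match v with
  | inl (i, b) => if s i == Some b then lab_top
                  else if s i == Some (~~ b) then lab_bot
                  else lab_default
  | inr _ => lab_default
  end.

Definition LCN (n : nat) (f : cnf n) : cgraph bool :=
  @CGraph bool (lcn_vert f) (fun _ => lab_default) (@lcn_edge n f).

Definition LCNa (n : nat) (f : cnf n) (s : passign n) : cgraph bool :=
  @CGraph bool (lcn_vert f) (@lcn_lab n f s) (@lcn_edge n f).

(* Main.v *)
Require Import Defs.
From mathcomp Require Import all_boot.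
From mathcomp Require Import zify.
Set Implicit Arguments. Unset Strict Implicit. Unset Printing Implicit Defensive.

Section Generic.
Variables (X : finType) (r : rel X).
Hypothesis rrefl : forall x, r x x.
Hypothesis rsym : forall x y, r x y -> r y x.
Hypothesis rtrans : forall x y z, r x y -> r y z -> r x z.

Lemma count_split (A : finType) (phi : A -> X) (Q : pred X) u :
  (forall x y, r x y -> Q x = Q y) -> Q u ->
  #|[set a | Q (phi a)]| = #|[set a | r (phi a) u]| + #|[set a | Q (phi a) && ~~ r (phi a) u]|.
Proof.
move=> HQ Qu; rewrite -(cardsID [set a | r (phi a) u] [set a | Q (phi a)]).
congr (_ + _); apply: eq_card => a; rewrite !inE //.
case e: (r (phi a) u) => /=; rewrite ?andbT ?andbF //.
all: try by rewrite (HQ _ _ e) Qu.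
all: by rewrite andbC.
Qed.

Lemma count_transfer (A B : finType) (phi : A -> X) (psi : B -> X) :
  (forall u, #|[set a | r (phi a) u]| = #|[set b | r (psi b) u]|) ->
  forall Q : pred X, (forall x y, r x y -> Q x = Q y) ->
  #|[set a | Q (phi a)]| = #|[set b | Q (psi b)]|.
Proof.
move=> H Q.
have [n Hn] : exists n, #|[set x | Q x]| <= n by eexists.
elim: n Q Hn => [|n IH] Q Hn HQ.
  have Q0 : forall x, Q x = false.
    move=> x; apply/negbTE/negP => Qx.
    by move: Hn; rewrite (cardsD1 x) inE Qx.
  by rewrite !eq_card0 // => x; rewrite inE Q0.
case: (pickP Q) => [u Qu|Q0]; last first.
  by rewrite !eq_card0 // => x; rewrite inE Q0.
pose Q' := fun x => Q x && ~~ r x u.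
have HQ' : forall x y, r x y -> Q' x = Q' y.
  move=> x y rxy; rewrite /Q' (HQ _ _ rxy); congr (_ && ~~ _).
  apply/idP/idP => h; [exact: rtrans (rsym rxy) h | exact: rtrans rxy h].
have Hn' : #|[set x | Q' x]| <= n.
  move: Hn; rewrite (count_split id HQ Qu) /=.
  have : 0 < #|[set x | r x u]|.
    apply/card_gt0P; exists u; rewrite inE.
    exact: rrefl.
  rewrite /Q'; lia.
rewrite (count_split phi HQ Qu) (count_split psi HQ Qu) H.
congr (_ + _); exact: (IH Q' Hn' HQ').
Qed.
End Generic.

Section KWL.
Variables (C : finType) (G : cgraph C) (k : nat).
Local Notation V := (vert G).
Local Notation Tup := (ktuple k V).
Local Notation R := (@kwl_eq C G k).

Lemma atpP (t s : Tup) : atp_eq t s -> forall i j,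
  ((t i == t j) = (s i == s j)) /\ (forall c, edge c (t i) (t j) = edge c (s i) (s j)).
Proof.
move=> /forallP H i j; move: (H i) => /forallP /(_ j) /andP [/andP [/eqP -> _]] /forallP He.
by split=> // c; apply/eqP.
Qed.

Lemma atp_refl (t : Tup) : atp_eq t t.
Proof. by apply/forallP=> i; apply/forallP=> j; rewrite !eqxx /=; apply/forallP. Qed.

Lemma atp_sym (t s : Tup) : atp_eq t s -> atp_eq s t.
Proof.
move=> /forallP H; apply/forallP=> i; apply/forallP=> j.
move: (H i) => /forallP /(_ j) /andP [/andP [/eqP h1 /eqP h2]] /forallP h3.
rewrite h1 h2 !eqxx /=; apply/forallP => c; by rewrite eq_sym.
Qed.

Lemma atp_trans (t s w : Tup) : atp_eq t s -> atp_eq s w -> atp_eq t w.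
Proof.
move=> /forallP H /forallP H'; apply/forallP=> i; apply/forallP=> j.
move: (H i) => /forallP /(_ j) /andP [/andP [/eqP h1 /eqP h2]] /forallP h3.
move: (H' i) => /forallP /(_ j) /andP [/andP [/eqP h1' /eqP h2']] /forallP h3'.
rewrite h1 h1' h2 h2' !eqxx /=; apply/forallP => c.
by rewrite (eqP (h3 c)) (eqP (h3' c)).
Qed.

Lemma kwl_refl l (t : Tup) : R l t t.
Proof.
elim: l => [|l IH] /=; first exact: atp_refl.
by rewrite IH /=; apply/forallP=> i; apply/forallP=> u.
Qed.

Lemma kwl_sym l (t s : Tup) : R l t s -> R l s t.
Proof.
elim: l t s => [|l IH] t s /=; first exact: atp_sym.
move=> /andP [h /forallP H]; rewrite IH //=.
apply/forallP=> i; apply/forallP=> u; by rewrite eq_sym (forallP (H i) u).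
Qed.

Lemma kwl_trans l (t s w : Tup) : R l t s -> R l s w -> R l t w.
Proof.
elim: l t s w => [|l IH] t s w /=; first exact: atp_trans.
move=> /andP [h /forallP H] /andP [h' /forallP H']; rewrite (IH _ _ _ h h') /=.
apply/forallP=> i; apply/forallP=> u.
by rewrite (eqP (forallP (H i) u)) (eqP (forallP (H' i) u)).
Qed.

Lemma kwl_S l (t s : Tup) : R l.+1 t s -> R l t s.
Proof. by case/andP. Qed.

Lemma kwl_atp l (t s : Tup) : R l t s -> atp_eq t s.
Proof. by elim: l => [|l IH] //= /andP [/IH]. Qed.

Lemma kwl_counts l (t s : Tup) : R l.+1 t s -> forall i u,
  #|[set x | R l (tsubst t i x) u]| = #|[set x | R l (tsubst s i x) u]|.
Proof. by move=> /andP [_ /forallP H] i u; apply/eqP; exact: (forallP (H i) u). Qed.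

Lemma kwl_stable_ex : exists L, kwl_stable G k L.
Proof.
pose c l := #|[set p : Tup * Tup | R l p.1 p.2]|.
have sub l : [set p : Tup * Tup | R l.+1 p.1 p.2] \subset [set p : Tup * Tup | R l p.1 p.2].
  by apply/subsetP => p; rewrite !inE => /kwl_S.
have dec l : c l.+1 <= c l by exact: subset_leq_card.
suff [L HL] : exists L, c L.+1 = c L.
  exists L => t s; apply/idP/idP => [h|]; last exact: kwl_S.
  have : [set p : Tup * Tup | R L.+1 p.1 p.2] = [set p : Tup * Tup | R L p.1 p.2].
    by apply/eqP; rewrite eqEcard sub /=; move: HL; rewrite /c => ->.
  by move/setP/(_ (t, s)); rewrite !inE /= => ->.
have key N : (exists L, c L.+1 = c L) \/ c N + N <= c 0.
  elim: N => [|N IH0]; first by right; rewrite addn0.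
  case: IH0 => [ex|IH]; first by left.
  have := dec N; rewrite leq_eqVlt => /orP [/eqP e|lt]; first by left; exists N.
  right; move: lt IH; move: (c N.+1) (c N) (c 0) => a b d; lia.
case: (key (c 0).+1) => //; move: (c 0) (c (c 0).+1) => a b; lia.
Qed.

Lemma tsubst_id (t : Tup) i : tsubst t i (t i) = t.
Proof. by apply/ffunP => j; rewrite ffunE; case: eqP => [->|]. Qed.

Lemma tsubstE (t : Tup) i x j : tsubst t i x j = if j == i then x else t j.
Proof. by rewrite ffunE. Qed.

Section Stable.
Variable L : nat.
Hypothesis HL : kwl_stable G k L.

Lemma stab (t s : Tup) : R L t s -> R L.+1 t s.
Proof. by rewrite -HL. Qed.

Lemma pos_transfer (t s : Tup) i (Q : pred Tup) :
  (forall x y, R L x y -> Q x = Q y) -> R L t s ->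
  #|[set x | Q (tsubst t i x)]| = #|[set x | Q (tsubst s i x)]|.
Proof.
move=> HQ /stab Hts; apply: (@count_transfer _ (R L)) => //.
- exact: kwl_refl.
- exact: kwl_sym.
- exact: kwl_trans.
- exact: kwl_counts.
Qed.

Lemma ex_transfer (t s : Tup) i (Q : pred Tup) :
  (forall x y, R L x y -> Q x = Q y) -> R L t s ->
  (exists x, Q (tsubst t i x)) -> exists x, Q (tsubst s i x).
Proof.
move=> HQ Hts [x Qx].
have : 0 < #|[set x | Q (tsubst t i x)]| by apply/card_gt0P; exists x; rewrite inE.
rewrite (pos_transfer i HQ Hts) => /card_gt0P [y]; rewrite inE; by exists y.
Qed.

Lemma copy (t s : Tup) i j : R L t s -> R L (tsubst t i (t j)) (tsubst s i (s j)).
Proof.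
move=> Hts; case: (eqVneq i j) => [<-|nij]; first by rewrite !tsubst_id.
pose Q := fun w => R L w (tsubst t i (t j)).
have HQ : forall x y, R L x y -> Q x = Q y.
  move=> x y rxy; rewrite /Q; apply/idP/idP => h.
  - exact: kwl_trans (kwl_sym rxy) h.
  - exact: kwl_trans rxy h.
have [x Qx] := ex_transfer (i:=i) HQ Hts (ex_intro _ (t j) (kwl_refl _ _)).
have nji : (j == i) = false by rewrite eq_sym (negbTE nij).
have := atpP (kwl_atp Qx) i j; rewrite !tsubstE eqxx nji eqxx.
case=> h _; move: h; rewrite eq_sym => /eqP ->.
exact: kwl_sym.
Qed.

Lemma copy_many (t s : Tup) (S : seq 'I_k) j : j \notin S -> R L t s ->
  R L [ffun i => if i \in S then t j else t i] [ffun i => if i \in S then s j else s i].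
Proof.
move=> jS Hts.
have E : forall w : Tup, [ffun i => if i \in S then w j else w i]
                        = foldr (fun i w' => tsubst w' i (w' j)) w S.
  move=> w; elim: S jS => [|a S IH] /=.
    by move=> _; apply/ffunP => i; rewrite ffunE.
  rewrite in_cons negb_or => /andP [ja jS]; rewrite -IH //.
  apply/ffunP => i; rewrite !ffunE in_cons.
  by case: (i == a) => //=; case: (j \in S).
rewrite !E; elim: S jS {E} => [|a S IH] //=.
rewrite in_cons negb_or => /andP [ja jS]; exact: copy (IH jS).
Qed.

End Stable.
End KWL.

Section WL1.
Variables (C : finType) (G : cgraph C).
Lemma wl_refl l (x : vert G) : wl_eq l x x.
Proof. elim: l => [|l IH] /=; first exact: eqxx. by rewrite IH; apply/forallP=> c; apply/forallP. Qed.
Lemma wl_sym l (x y : vert G) : wl_eq l x y -> wl_eq l y x.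
Proof.
elim: l x y => [|l IH] x y /=; first by rewrite eq_sym.
move=> /andP [h /forallP H]; rewrite IH //=; apply/forallP=> c; apply/forallP=> u.
by rewrite eq_sym (forallP (H c) u).
Qed.
Lemma wl_trans l (x y z : vert G) : wl_eq l x y -> wl_eq l y z -> wl_eq l x z.
Proof.
elim: l x y z => [|l IH] x y z /=; first by move=> /eqP -> /eqP ->.
move=> /andP [h /forallP H] /andP [h' /forallP H']; rewrite (IH _ _ _ h h') /=.
apply/forallP=> c; apply/forallP=> u.
by rewrite (eqP (forallP (H c) u)) (eqP (forallP (H' c) u)).
Qed.
End WL1.

Section Reach.
Variables (C : finType) (G : cgraph C) (k : nat).
Local Notation V := (vert G).
Local Notation Tup := (ktuple k V).
Local Notation R := (@kwl_eq C G k).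

Definition adj : rel V := fun x y => [exists c, edge c x y].

Fixpoint reach d (x y : V) : bool :=
  (x == y) || (if d is d'.+1 then [exists w, adj x w && reach d' w y] else false).

Lemma connect_reach x y : connect adj x y <-> exists d, reach d x y.
Proof.
split.
  move/connectP => [p Hp ->]; exists (size p).
  elim: p x Hp => [|w p IH] x /=; first by rewrite eqxx.
  move=> /andP [axw Hp]; apply/orP; right; apply/existsP; exists w.
  by rewrite axw IH.
move=> [d]; elim: d x => [|d IH] x /=; first by rewrite orbF => /eqP ->; exact: connect0.
case/orP => [/eqP ->|/existsP [w /andP [axw /IH h]]]; first exact: connect0.
exact: connect_trans (connect1 axw) h.
Qed.

Hypothesis k3 : 3 <= k.

Lemma scratch (i j : 'I_k) : exists m : 'I_k, (m != i) && (m != j).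
Proof.
case: (pickP (fun m : 'I_k => (m != i) && (m != j))) => [m h|H]; first by exists m.
exfalso.
have : [set: 'I_k] \subset [set i; j].
  apply/subsetP => m _; rewrite !inE; move: (H m); by case: (m == i); case: (m == j).
move/subset_leq_card; rewrite cardsT card_ord cards2; case: (i != j) => /=; lia.
Qed.

Variable L : nat.
Hypothesis HL : kwl_stable G k L.

Lemma adj_inv (t s : Tup) i j : atp_eq t s -> adj (t i) (t j) = adj (s i) (s j).
Proof.
move=> /atpP /(_ i j) [_ E]; rewrite /adj.
by apply/existsP/existsP => -[c h]; exists c; rewrite ?E // -E.
Qed.

Lemma reach_inv d (t s : Tup) i j : R L t s -> reach d (t i) (t j) = reach d (s i) (s j).
Proof.
elim: d t s i j => [|d IH] t s i j Hts /=.
  by have [-> _] := atpP (kwl_atp Hts) i j.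
have [-> _] := atpP (kwl_atp Hts) i j; congr (_ || _).
have [m /andP [mi mj]] := scratch i j.
pose Q := fun w : Tup => adj (w i) (w m) && reach d (w m) (w j).
have HQ : forall x y, R L x y -> Q x = Q y.
  by move=> x y rxy; rewrite /Q (adj_inv _ _ (kwl_atp rxy)) (IH _ _ _ _ rxy).
have E : forall w : Tup, [exists x, adj (w i) x && reach d x (w j)] = [exists x, Q (tsubst w m x)].
  move=> w; apply: eq_existsb => x; rewrite /Q !tsubstE eqxx.
  by rewrite eq_sym (negbTE mi) eq_sym (negbTE mj).
rewrite !E; apply/existsP/existsP => -[x h].
  exact: (ex_transfer HL (i:=m) HQ Hts (ex_intro _ x h)).
exact: (ex_transfer HL (i:=m) HQ (kwl_sym Hts) (ex_intro _ x h)).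
Qed.

Lemma conn_inv (t s : Tup) i j : R L t s -> connect adj (t i) (t j) = connect adj (s i) (s j).
Proof.
move=> Hts; apply/idP/idP => /connect_reach [d h]; apply/connect_reach; exists d.
  by rewrite -(reach_inv _ _ _ Hts).
by rewrite (reach_inv _ _ _ Hts).
Qed.
End Reach.

Lemma card_sum_split (A B : finType) (h : pred (A + B)%type) :
  #|[set z | h z]| = #|[set x | h (inl x)]| + #|[set y | h (inr y)]|.
Proof.
have -> : [set z | h z] = (@inl A B) @: [set x | h (inl x)] :|: (@inr A B) @: [set y | h (inr y)].
  apply/setP => -[x|y]; rewrite !inE.
  - apply/idP/orP => [hx|[/imsetP [x' hx' [->]]|/imsetP [y' _ //]]]; last by rewrite inE in hx'.
    by left; apply/imsetP; exists x; rewrite ?inE.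
  - apply/idP/orP => [hy|[/imsetP [x' _ //]|/imsetP [y' hy' [->]]]]; last by rewrite inE in hy'.
    by right; apply/imsetP; exists y; rewrite ?inE.
rewrite cardsU.
have -> : (@inl A B) @: [set x | h (inl x)] :&: (@inr A B) @: [set y | h (inr y)] = set0.
  apply/setP => z; rewrite !inE; apply/negP => /andP [/imsetP [x _ ->] /imsetP [y _ //]].
rewrite cards0 subn0 !card_imset //; move=> a b [] //.
Qed.

Lemma card_const (V : finType) (k : nat) (jj : 'I_k) (h : pred V) :
  #|[set t : ktuple k V | [forall i, t i == t jj] && h (t jj)]| = #|[set x | h x]|.
Proof.
have -> : [set t : ktuple k V | [forall i, t i == t jj] && h (t jj)]
          = (fun x => [ffun _ : 'I_k => x]) @: [set x | h x].
  apply/setP => t; rewrite !inE; apply/idP/imsetP.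
  - move=> /andP [/forallP H ht]; exists (t jj); first by rewrite inE.
    by apply/ffunP => i; rewrite ffunE; apply/eqP.
  - move=> [x hx ->]; rewrite !ffunE; rewrite inE in hx; rewrite hx andbT.
    by apply/forallP => i; rewrite !ffunE.
rewrite card_imset // => x y /ffunP /(_ jj); by rewrite !ffunE.
Qed.

Lemma card_split_pred (A : finType) (h c : pred A) :
  #|[set a | h a]| = #|[set a | c a && h a]| + #|[set a | ~~ c a && h a]|.
Proof.
rewrite -(cardsID [set a | c a] [set a | h a]); congr (_ + _); apply: eq_card => a;
by rewrite !inE andbC.
Qed.

Section Main.
Variables (n m : nat) (f : cnf n) (g : cnf m) (k : nat).
Local Notation UG := (gunion (LCN f) (LCN g)).
Local Notation Om := (vert UG).
Local Notation Tup := (ktuple k Om).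
Local Notation R := (@kwl_eq bool UG k).

Lemma edge_sym c (x y : Om) : edge c x y = edge c y x.
Proof.
case: x => [[[i b]|cl]|[[i b]|cl]]; case: y => [[[i' b']|cl']|[[i' b']|cl']] //=.
all: by rewrite eq_sym; congr (_ && _); rewrite eq_sym.
Qed.

Definition side (z : Om) := if z is inl _ then true else false.

Lemma edge_side c (x y : Om) : edge c x y -> side x = side y.
Proof. by case: x => [x|x]; case: y => [y|y]. Qed.

Lemma reach_side d (x y : Om) : reach d x y -> side x = side y.
Proof.
elim: d x => [|d IH] x /=; first by rewrite orbF => /eqP ->.
case/orP => [/eqP -> //|/existsP [w /andP [/existsP [c /edge_side ->] /IH]]] //.
Qed.

Lemma connect_side (x y : Om) : connect (@adj bool UG) x y -> side x = side y.
Proof. by move/connect_reach => [d /reach_side]. Qed.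

Variable L : nat.
Hypothesis HL : kwl_stable UG k L.
Hypothesis k3 : 3 <= k.
Variables (p : nat) (j jj : 'I_k).
Hypotheses (njj : j != jj) (pj : p <= j) (pjj : p <= jj).
Variables (B1 B2 : Tup).
Hypothesis HB : R L B1 B2.
Hypothesis HB1 : forall i : 'I_k, i < p -> side (B1 i).
Hypothesis HB2 : forall i : 'I_k, i < p -> ~~ side (B2 i).
Hypothesis balance : forall u,
  #|[set t | R L (inl_tuple (vert (LCN g)) t) u]| = #|[set t | R L (inr_tuple (vert (LCN f)) t) u]|.

Definition Bz (z : Om) := if z is inl _ then B1 else B2.
Definition Tb (b : Tup) (z : Om) : Tup := [ffun i : 'I_k => if i < p then b i else z].
Definition T z := Tb (Bz z) z.
Definition Cst (z : Om) : Tup := [ffun _ : 'I_k => z].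
Definition connT (t : Tup) := [exists i : 'I_k, (i < p) && connect (@adj bool UG) (t i) (t j)].
Definition conn z := connT (T z).
Definition E z z' := if conn z then conn z' && R L (T z) (T z')
                     else ~~ conn z' && R L (Cst z) (Cst z').

Lemma ltn_j : (j < p) = false.
Proof. by apply/negbTE; rewrite -leqNgt. Qed.
Lemma ltn_jj : (jj < p) = false.
Proof. by apply/negbTE; rewrite -leqNgt. Qed.

Lemma TbE b z i : Tb b z i = if i < p then b i else z.
Proof. by rewrite ffunE. Qed.

Lemma connT_inv t t' : R L t t' -> connT t = connT t'.
Proof.
move=> h; rewrite /connT; apply: eq_existsb => i.
by rewrite (conn_inv k3 HL _ _ h).
Qed.

Definition copyS (q : 'I_k) (t : Tup) : Tup :=
  [ffun i : 'I_k => if (p <= i) && (i != q) then t q else t i].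

Lemma copyS_inv q (t t' : Tup) : R L t t' -> R L (copyS q t) (copyS q t').
Proof.
move=> h; have := copy_many HL (S := [seq i : 'I_k <- enum 'I_k | (p <= i) && (i != q)]) (j := q) _ h.
have E1 : forall w : Tup, [ffun i => if i \in [seq i : 'I_k <- enum 'I_k | (p <= i) && (i != q)] then w q else w i] = copyS q w.
  by move=> w; apply/ffunP => i; rewrite !ffunE mem_filter mem_enum andbT.
rewrite !E1; apply; by rewrite mem_filter eqxx andbF.
Qed.

Lemma copyS_sub (q : 'I_k) (b : Tup) x : p <= q -> copyS q (tsubst b q x) = Tb b x.
Proof.
move=> pq; apply/ffunP => i; rewrite !ffunE eqxx.
case: eqP => [->|_]; first by rewrite ltnNge pq.
by case: (ltnP i p) => ip //=.
Qed.

Lemma Tb_T (z x : Om) : side x = side z -> Tb (T z) x = T x.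
Proof.
move=> sxz; apply/ffunP => i; rewrite /T !TbE.
have -> : Bz z = Bz x by case: z sxz; case: x.
by case: (i < p).
Qed.

Lemma Tb_transfer (Q : pred Tup) : (forall x y, R L x y -> Q x = Q y) ->
  #|[set x | Q (Tb B1 x)]| = #|[set x | Q (Tb B2 x)]|.
Proof.
move=> HQ; apply: (@count_transfer _ (R L)) => //.
- exact: kwl_refl.
- exact: kwl_sym.
- exact: kwl_trans.
move=> W.
pose Q' := fun t => R L (copyS j t) W.
have HQ' : forall x y, R L x y -> Q' x = Q' y.
  move=> x y rxy; rewrite /Q'; have h := copyS_inv j rxy.
  by apply/idP/idP => h'; [apply: kwl_trans (kwl_sym h) h' | apply: kwl_trans h h'].
have E1 : forall b, [set x | Q' (tsubst b j x)] = [set x | R L (Tb b x) W].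
  by move=> b; apply/setP => x; rewrite !inE /Q' copyS_sub.
by have := pos_transfer HL j HQ' HB; rewrite !E1.
Qed.


Lemma Cst_copy q (t t' : Tup) : R L t t' -> R L (Cst (t q)) (Cst (t' q)).
Proof.
move=> h; have := copy_many HL (S := [seq i <- enum 'I_k | i != q]) (j := q) _ h.
have E1 : forall w : Tup, [ffun i => if i \in [seq i <- enum 'I_k | i != q] then w q else w i] = Cst (w q).
  move=> w; apply/ffunP => i; rewrite !ffunE mem_filter mem_enum andbT.
  by case: eqP => [->|].
rewrite !E1; apply; by rewrite mem_filter eqxx.
Qed.

Lemma cross1 y : connT (Tb B1 (inr y)) = false.
Proof.
apply/negbTE/existsP => -[i /andP [ip]]; rewrite !TbE ip ltn_j => /connect_side.
by move: (HB1 ip); case: (B1 i).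
Qed.

Lemma cross2 x : connT (Tb B2 (inl x)) = false.
Proof.
apply/negbTE/existsP => -[i /andP [ip]]; rewrite !TbE ip ltn_j => /connect_side.
by move: (HB2 ip); case: (B2 i).
Qed.

Lemma conn_nb c (z x : Om) : edge c z x -> conn z = conn x.
Proof.
move=> e; have sxz := edge_side e.
rewrite /conn /T /connT; have -> : Bz z = Bz x by case: z e sxz; case: x.
apply: eq_existsb => i; rewrite !TbE ltn_j; case: (i < p) => //=.
apply/idP/idP => h.
- apply: connect_trans h (connect1 _); apply/existsP; by exists c.
- apply: connect_trans h (connect1 _); apply/existsP; exists c; by rewrite edge_sym.
Qed.


Variables (sg : passign n) (tu : passign m).
Local Notation VG := (gunion (LCNa f sg) (LCNa g tu)).

Definition F (z : Om) : nat :=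
  if [exists i : 'I_k, (i < p) && ~~ odd i && (Bz z i == z)] then 1
  else if [exists i : 'I_k, (i < p) && odd i && (Bz z i == z)] then 2 else 0.

Hypothesis Hlab : forall z : Om, @vlab bool VG z = F z.

Lemma F_unconn z : ~~ conn z -> F z = 0.
Proof.
move=> nc; rewrite /F.
have H : forall i : 'I_k, (i < p) -> (Bz z i == z) = false.
  move=> i ip; apply/negbTE/negP => /eqP e; move/negP: nc; apply.
  apply/existsP; exists i; rewrite ip /T !TbE ip ltn_j e; exact: connect0.
case: existsP => [[i /andP [/andP [ip _]]]|_]; first by rewrite H.
case: existsP => [[i /andP [/andP [ip _]]]|_] //; by rewrite H.
Qed.

Lemma lab_E z z' : E z z' -> @vlab bool VG z = @vlab bool VG z'.
Proof.
rewrite !Hlab /E; case: ifP => cz.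
  move=> /andP [_ h].
  have K : forall i : 'I_k, i < p -> (Bz z i == z) = (Bz z' i == z').
    move=> i ip; have [e _] := atpP (kwl_atp h) i j.
    by move: e; rewrite /T !TbE ip ltn_j.
  rewrite /F.
  have -> : [exists i : 'I_k, (i < p) && ~~ odd i && (Bz z i == z)]
          = [exists i : 'I_k, (i < p) && ~~ odd i && (Bz z' i == z')].
    by apply: eq_existsb => i; case: (ltnP i p) => ip //=; rewrite K.
  have -> : [exists i : 'I_k, (i < p) && odd i && (Bz z i == z)]
          = [exists i : 'I_k, (i < p) && odd i && (Bz z' i == z')].
    by apply: eq_existsb => i; case: (ltnP i p) => ip //=; rewrite K.
  by [].
move=> /andP [cz' _]; rewrite !F_unconn //; by rewrite cz.
Qed.

Lemma E_wl l z z' : E z z' -> @wl_eq bool VG l z z'.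
Proof.
elim: l z z' => [|l IH] z z' Ezz' /=; first by apply/eqP; exact: (lab_E Ezz').
rewrite IH //=; apply/forallP => c; apply/forallP => u; apply/eqP.
move: Ezz'; rewrite /E; case: ifP => cz.
- move=> /andP [cz' h].
  pose Q := fun t : Tup => edge c (t j) (t jj) &&
     [exists y, conn y && R L (copyS jj t) (T y) && @wl_eq bool VG l y u].
  have HQ : forall x y, R L x y -> Q x = Q y.
    move=> x y rxy; rewrite /Q; have [_ ->] := atpP (kwl_atp rxy) j jj.
    congr (_ && _); apply: eq_existsb => w; have h' := copyS_inv jj rxy.
    case: (conn w) => //=; congr (_ && _).
    by apply/idP/idP => h''; [apply: kwl_trans (kwl_sym h') h'' | apply: kwl_trans h' h''].
  have S1 : forall w, conn w -> [set x | edge c w x && @wl_eq bool VG l x u]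
                              = [set x | Q (tsubst (T w) jj x)].
    move=> w cw; apply/setP => x; rewrite !inE /Q !tsubstE eqxx (negbTE njj).
    rewrite /T TbE ltn_j.
    case e: (edge c w x) => //=.
    have sx := edge_side e.
    rewrite copyS_sub // Tb_T //.
    have cx : conn x by rewrite -(conn_nb e).
    apply/idP/existsP => [wx|[y /andP [/andP [cy hy] wy]]].
      by exists x; rewrite cx kwl_refl.
    apply: wl_trans _ wy; apply: IH; by rewrite /E cx cy hy.
  rewrite (S1 _ cz) (S1 _ cz'); have := pos_transfer HL jj HQ h; exact.
- move=> /andP [cz' h].
  pose Q := fun t : Tup => edge c (t j) (t jj) &&
     [exists y, ~~ conn y && R L (Cst (t jj)) (Cst y) && @wl_eq bool VG l y u].
  have HQ : forall x y, R L x y -> Q x = Q y.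
    move=> x y rxy; rewrite /Q; have [_ ->] := atpP (kwl_atp rxy) j jj.
    congr (_ && _); apply: eq_existsb => w; have h' := Cst_copy jj rxy.
    case: (conn w) => //=; congr (_ && _).
    by apply/idP/idP => h''; [apply: kwl_trans (kwl_sym h') h'' | apply: kwl_trans h' h''].
  have S1 : forall w, ~~ conn w -> [set x | edge c w x && @wl_eq bool VG l x u]
                              = [set x | Q (tsubst (Cst w) jj x)].
    move=> w cw; apply/setP => x; rewrite !inE /Q !tsubstE eqxx (negbTE njj) !ffunE.
    case e: (edge c w x) => //=.
    have cx : ~~ conn x by rewrite -(conn_nb e).
    apply/idP/existsP => [wx|[y /andP [/andP [cy hy] wy]]].
      by exists x; rewrite cx kwl_refl.
    apply: wl_trans _ wy; apply: IH; by rewrite /E (negbTE cx) cy hy.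
  rewrite (S1 _ (negbT cz)) (S1 _ cz'); have := pos_transfer HL jj HQ h; exact.
Qed.

Lemma not_dist : ~ wl_distinguished (LCNa f sg) (LCNa g tu).
Proof.
move=> [l [_ [u /negP H]]]; apply: H; apply/eqP.
pose P := fun z : Om => @wl_eq bool VG l z u.
have EP : forall z y, E z y -> P y -> P z.
  by move=> z y /(E_wl l) h; apply: wl_trans.
pose Qc := fun t : Tup => connT t && [exists y, conn y && R L t (T y) && P y].
have HQc : forall x y, R L x y -> Qc x = Qc y.
  move=> x y rxy; rewrite /Qc (connT_inv rxy); congr (_ && _).
  apply: eq_existsb => w; case: (conn w) => //=; congr (_ && _).
  by apply/idP/idP => h; [apply: kwl_trans (kwl_sym rxy) h | apply: kwl_trans rxy h].
have QcT : forall z, Qc (T z) = conn z && P z.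
  move=> z; rewrite /Qc -/(conn z); case cz: (conn z) => //=.
  apply/existsP/idP => [[y /andP [/andP [cy h] py]]|pz]; last by exists z; rewrite cz kwl_refl.
  by apply: EP py; rewrite /E cz cy h.
have C1 : #|[set x | conn (inl x) && P (inl x)]| = #|[set z | Qc (Tb B1 z)]|.
  rewrite [in RHS]card_sum_split /=.
  have -> : #|[set y | Qc (Tb B1 (inr y))]| = 0.
    by apply: eq_card0 => y; rewrite inE /Qc cross1.
  by rewrite addn0; apply: eq_card => x; rewrite !inE -QcT.
have C2 : #|[set x | conn (inr x) && P (inr x)]| = #|[set z | Qc (Tb B2 z)]|.
  rewrite [in RHS]card_sum_split /=.
  have -> : #|[set y | Qc (Tb B2 (inl y))]| = 0.
    by apply: eq_card0 => y; rewrite inE /Qc cross2.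
  by apply: eq_card => x; rewrite !inE -QcT.
pose P2 := fun z : Om => [exists y, ~~ conn y && R L (Cst z) (Cst y) && P y].
have UP : forall z, ~~ conn z -> P2 z = P z.
  move=> z cz; apply/existsP/idP => [[y /andP [/andP [cy h] py]]|pz]; last by exists z; rewrite cz kwl_refl.
  by apply: EP py; rewrite /E (negbTE cz) cy h.
have U1 : forall (A : finType) (h : A -> Om),
    #|[set x | ~~ conn (h x) && P (h x)]| = #|[set x | ~~ conn (h x) && P2 (h x)]|.
  move=> A h; apply: eq_card => x; rewrite !inE.
  by case cx: (conn (h x)) => //=; rewrite UP ?cx.
pose Qcu := fun t : Tup => connT t && [exists y, ~~ conn y && R L (Cst (t j)) (Cst y) && P y].
have HQcu : forall x y, R L x y -> Qcu x = Qcu y.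
  move=> x y rxy; rewrite /Qcu (connT_inv rxy); congr (_ && _).
  apply: eq_existsb => w; have h' := Cst_copy j rxy.
  case: (conn w) => //=; congr (_ && _).
  by apply/idP/idP => h; [apply: kwl_trans (kwl_sym h') h | apply: kwl_trans h' h].
have QcuT : forall z, Qcu (T z) = conn z && P2 z.
  by move=> z; rewrite /Qcu -/(conn z) /T TbE ltn_j.
have D1 : #|[set x | conn (inl x) && P2 (inl x)]| = #|[set z | Qcu (Tb B1 z)]|.
  rewrite [in RHS]card_sum_split /=.
  have -> : #|[set y | Qcu (Tb B1 (inr y))]| = 0.
    by apply: eq_card0 => y; rewrite inE /Qcu cross1.
  by rewrite addn0; apply: eq_card => x; rewrite !inE -QcuT.
have D2 : #|[set x | conn (inr x) && P2 (inr x)]| = #|[set z | Qcu (Tb B2 z)]|.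
  rewrite [in RHS]card_sum_split /=.
  have -> : #|[set y | Qcu (Tb B2 (inl y))]| = 0.
    by apply: eq_card0 => y; rewrite inE /Qcu cross2.
  by apply: eq_card => x; rewrite !inE -QcuT.
pose Qu := fun t : Tup => [forall i, t i == t jj] && P2 (t jj).
have HQu : forall x y, R L x y -> Qu x = Qu y.
  move=> x y rxy; rewrite /Qu; congr (_ && _).
    apply: eq_forallb => i; by have [-> _] := atpP (kwl_atp rxy) i jj.
  apply: eq_existsb => w; have h' := Cst_copy jj rxy.
  case: (conn w) => //=; congr (_ && _).
  by apply/idP/idP => h; [apply: kwl_trans (kwl_sym h') h | apply: kwl_trans h' h].
have F1 : #|[set x | P2 (inl x)]| = #|[set t | Qu (inl_tuple (vert (LCN g)) t)]|.
  rewrite -(card_const jj (fun x => P2 (inl x))); apply: eq_card => t; rewrite !inE /Qu ffunE.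
  congr (_ && _); apply: eq_forallb => i; rewrite !ffunE.
  by apply/eqP/eqP => [->|[]].
have F2 : #|[set x | P2 (inr x)]| = #|[set t | Qu (inr_tuple (vert (LCN f)) t)]|.
  rewrite -(card_const jj (fun x => P2 (inr x))); apply: eq_card => t; rewrite !inE /Qu ffunE.
  congr (_ && _); apply: eq_forallb => i; rewrite !ffunE.
  by apply/eqP/eqP => [->|[]].
have G0 : #|[set t | Qu (inl_tuple (vert (LCN g)) t)]| = #|[set t | Qu (inr_tuple (vert (LCN f)) t)]|.
  apply: (@count_transfer _ (R L)) => //.
  - exact: kwl_refl.
  - exact: kwl_sym.
  - exact: kwl_trans.
have G1 := Tb_transfer HQc.
have G2 := Tb_transfer HQcu.
have S1 := card_split_pred (fun x => P (inl x)) (fun x => conn (inl x)).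
have S2 := card_split_pred (fun x => P (inr x)) (fun x => conn (inr x)).
have S3 := card_split_pred (fun x => P2 (inl x)) (fun x => conn (inl x)).
have S4 := card_split_pred (fun x => P2 (inr x)) (fun x => conn (inr x)).
have U1l := U1 _ (@inl _ (vert (LCN g))).
have U1r := U1 _ (@inr (vert (LCN f)) _).
rewrite /= in S1 S2 S3 S4 U1l U1r.
change (#|[set x | P (inl x)]| = #|[set x | P (inr x)]|).
rewrite S1 S2 C1 C2 G1 U1l U1r; move: S3 S4; rewrite F1 F2 G0 D1 D2 G2. lia.
Qed.
End Main.

Lemma inl_eq (A B : eqType) (a b : A) : (@inl A B a == inl b) = (a == b).
Proof. by apply/eqP/eqP => [[]|->]. Qed.
Lemma inr_eq (A B : eqType) (a b : B) : (@inr A B a == inr b) = (a == b).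
Proof. by apply/eqP/eqP => [[]|->]. Qed.

Section Lab.
Variables (h : nat) (fh : cnf h) (k p : nat) (s : 'I_k -> lcn_vert fh).
Hypothesis pk : p <= k.
Hypothesis pev : ~~ odd p.
Definition PA := forall i i' : 'I_k, i < p -> ~~ odd i -> val i' = i.+1 ->
  @lcn_edge h fh false (s i) (s i').
Definition PB := forall i i' : 'I_k, i < p -> i' < p -> ~~ odd i -> ~~ odd i' -> i != i' ->
  (s i != s i') && ~~ @lcn_edge h fh false (s i) (s i').
Definition Fg (x : lcn_vert fh) : nat :=
  if [exists i : 'I_k, (i < p) && ~~ odd i && (s i == x)] then 1
  else if [exists i : 'I_k, (i < p) && odd i && (s i == x)] then 2 else 0.

Hypothesis Hpa : PA.

Lemma next_ord (i : 'I_k) : i < p -> ~~ odd i -> exists i' : 'I_k, val i' = i.+1.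
Proof.
move=> ip oi; have lt : i.+1 < k by lia.
by exists (Ordinal lt).
Qed.

Lemma prev_ord (i : 'I_k) : i < p -> odd i -> exists i0 : 'I_k, val i0 = i.-1.
Proof.
move=> ip oi; have lt : i.-1 < k by lia.
by exists (Ordinal lt).
Qed.

Lemma edge_false_shape (x y : lcn_vert fh) : @lcn_edge h fh false x y ->
  exists w b, x = inl (w, b) /\ y = inl (w, ~~ b).
Proof.
case: x => [[w b]|c]; case: y => [[w' b']|c'] //= /andP [/eqP <-]; case: b; case: b' => //= _;
by exists w; eexists; split.
Qed.

Lemma peb_lit (i : 'I_k) : i < p -> exists l, s i = inl l.
Proof.
move=> ip; case: (boolP (odd i)) => oi.
  have [i0 e] := prev_ord ip oi.
  have e' : (i0 : nat) = i.-1 := e.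
  have i0p : i0 < p by lia.
  have oi0 : ~~ odd i0 by lia.
  have ei : val i = i0.+1 by rewrite /=; lia.
  have := Hpa i0p oi0 ei.
  by move=> /edge_false_shape [w [b [_ ->]]]; eexists.
have [i' e] := next_ord ip oi.
have := Hpa (i := i) (i' := i') ip oi e.
by move=> /edge_false_shape [w [b [-> _]]]; eexists.
Qed.

Hypothesis Hpb : PB.
Variable rho : passign h.
Hypothesis H1 : forall w b, (rho w == Some b) = [exists i : 'I_k, (i < p) && ~~ odd i && (s i == inl (w, b))].

Lemma H2 w b : (rho w == Some (~~ b)) = [exists i : 'I_k, (i < p) && odd i && (s i == inl (w, b))].
Proof.
rewrite H1; apply/existsP/existsP => -[i /andP [/andP [ip oi] /eqP si]].
  have [i' e] := next_ord ip oi; exists i'.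
  have := Hpa ip oi e; rewrite si => /edge_false_shape [w' [b' [[<- <-] ->]]].
  have e2 : (i' : nat) = i.+1 := e.
  rewrite negbK eqxx andbT; apply/andP; split; lia.
have [i0 e] := prev_ord ip oi; exists i0.
have e' : (i0 : nat) = i.-1 := e.
have i0p : i0 < p by lia.
have oi0 : ~~ odd i0 by lia.
have ei : val i = i0.+1 by rewrite /=; lia.
have := Hpa i0p oi0 ei.
move=> /edge_false_shape [w' [b' [-> ]]]; rewrite si => -[-> eb]; rewrite eb negbK.
rewrite eqxx andbT; apply/andP; split; lia.
Qed.

Lemma Lab x : lcn_lab rho x = Fg x.
Proof.
rewrite /Fg; case: x => [[w b]|c] /=.
  by rewrite H1 H2.
have H : forall i : 'I_k, i < p -> (s i == inr c) = false.
  by move=> i ip; have [l ->] := peb_lit ip.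
case: existsP => [[i /andP [/andP [ip _]]]|_]; first by rewrite H.
case: existsP => [[i /andP [/andP [ip _]]]|_] //; by rewrite H.
Qed.


End Lab.

Definition tauof (h k p : nat) (fh : cnf h) (s : 'I_k -> lcn_vert fh) : passign h :=
  [ffun w => if [exists i : 'I_k, (i < p) && ~~ odd i && (s i == inl (w, true))] then Some true
             else if [exists i : 'I_k, (i < p) && ~~ odd i && (s i == inl (w, false))] then Some false
             else None].

Lemma tauof_H1 (h k p : nat) (fh : cnf h) (s : 'I_k -> lcn_vert fh) :
  PB p s -> forall w b, (tauof p s w == Some b) =
     [exists i : 'I_k, (i < p) && ~~ odd i && (s i == inl (w, b))].
Proof.
move=> Hpb w b; rewrite /tauof ffunE.
case: b.
  by case: ifP => // _; case: ifP.
case: ifP => [/existsP [i /andP [/andP [ip oi] /eqP si]]|_]; last by case: ifP.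
apply/esym/negbTE/existsP => -[i' /andP [/andP [ip' oi'] /eqP si']].
have nii : i != i' by apply/eqP => eii; move: si'; rewrite -eii si.
have := Hpb i i' ip ip' oi oi' nii; rewrite si si'. by rewrite /= eqxx andbF.
Qed.

Section Transfer.
Variables (n m : nat) (f : cnf n) (g : cnf m) (k p : nat).
Local Notation UG := (gunion (LCN f) (LCN g)).
Variables (t : ktuple k (lcn_vert f)) (s : ktuple k (lcn_vert g)).
Hypothesis Hat : @atp_eq bool UG k (inl_tuple (vert (LCN g)) t) (inr_tuple (vert (LCN f)) s).

Lemma at_eq i i' : (t i == t i') = (s i == s i').
Proof.
have [e _] := atpP Hat i i'; move: e; by rewrite !ffunE inl_eq inr_eq.
Qed.
Lemma at_edge i i' : @lcn_edge n f false (t i) (t i') = @lcn_edge m g false (s i) (s i').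
Proof.
have [_ e] := atpP Hat i i'; move: (e false); by rewrite !ffunE.
Qed.

Lemma PA_transfer : PA p t -> PA p s.
Proof. by move=> H i i' ip oi e; rewrite -at_edge; apply: H. Qed.
Lemma PB_transfer : PB p t -> PB p s.
Proof. by move=> H i i' ip ip' oi oi' nii; rewrite -at_eq -at_edge; apply: H. Qed.
End Transfer.

Theorem lemma1 (k n m : nat) (f : cnf n) (g : cnf m) :
  4 <= k ->
  ~ kwl_distinguished k (LCN f) (LCN g) ->
  forall sigma : passign n,
    #|assigned sigma| <= k./2 - 1 ->
    exists tau : passign m, ~ wl_distinguished (LCNa f sigma) (LCNa g tau).
Proof.
move=> k4 Hnd sg Hsg.
have [L HL] := kwl_stable_ex (gunion (LCN f) (LCN g)) k.
have balance : forall u, #|[set t | @kwl_eq bool (gunion (LCN f) (LCN g)) k L (inl_tuple (vert (LCN g)) t) u]|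
                       = #|[set t | @kwl_eq bool (gunion (LCN f) (LCN g)) k L (inr_tuple (vert (LCN f)) t) u]|.
  move=> u; apply/eqP; apply/negPn/negP => H; apply: Hnd; exists L; split => //; by exists u.
set a := #|assigned sg|.
set p := a.*2.
have pk2 : p <= k - 2 by rewrite /p; lia.
have k1 : k.-1 < k by lia.
have k2 : k.-2 < k by lia.
pose j := Ordinal k1; pose jj := Ordinal k2.
have njj : j != jj by apply/eqP => /(congr1 val) /=; lia.
have pj : p <= j by rewrite /=; lia.
have pjj : p <= jj by rewrite /=; lia.
have k3 : 2 < k by lia.
have pev : ~~ odd p by rewrite /p odd_double.
case: (posnP a) => [a0|apos].
  exists [ffun _ => None] => Hd.
  case: (pickP (fun _ : vert (gunion (LCN f) (LCN g)) => true)) => [w0 _|Hem]; last first.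
    by move: Hd => [l [_ [u _]]]; have := Hem u.
  have p0 : p = 0 by rewrite /p a0.
  have A0 : assigned sg = set0 by apply/cards0_eq.
  apply: (not_dist HL k3 njj pj pjj (B1 := [ffun _ => w0]) (B2 := [ffun _ => w0]) (kwl_refl _ _) _ _ balance _ Hd).
  - by move=> i; rewrite p0.
  - by move=> i; rewrite p0.
  move=> z; rewrite /F.
  have H0 : forall P Q : 'I_k -> bool, [exists i : 'I_k, (i < p) && P i && Q i] = false.
    by move=> P Q; apply/negbTE/existsP => -[i]; rewrite p0.
  rewrite !H0.
  case: z => [[[w b]|c]|[[w b]|c]] //=; rewrite ?ffunE //.
  have : w \notin assigned sg by rewrite A0 inE.
  by rewrite inE negbK => /eqP ->.
have [w0 w0A] : exists w0, w0 \in assigned sg by apply/card_gt0P.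
pose e := enum (assigned sg).
have se : size e = a by rewrite /a cardE.
have ue : uniq e by exact: enum_uniq.
pose vl := fun v => odflt true (sg v).
pose Bl1 := fun i : nat => (nth w0 e i./2, if odd i then ~~ vl (nth w0 e i./2) else vl (nth w0 e i./2)).
pose t0 : ktuple k (lcn_vert f) := [ffun i : 'I_k => inl (Bl1 i)].
have inA : forall q, q < a -> sg (nth w0 e q) = Some (vl (nth w0 e q)).
  move=> q qa; have : nth w0 e q \in assigned sg by rewrite -mem_enum mem_nth ?se.
  by rewrite inE /vl; case: (sg _).
have PAt : PA p t0.
  move=> i i' ip oi ei; rewrite !ffunE /= /Bl1 ei.
  have -> : i.+1./2 = i./2 by lia.
  by rewrite eqxx /= (negbTE oi) /=; case: (vl _).
have PBt : PB p t0.
  move=> i i' ip ip' oi oi' nii; rewrite !ffunE /= /Bl1 inl_eq.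
  have nii' : (i : nat) != i' by [].
  have ne : nth w0 e i./2 != nth w0 e i'./2.
    rewrite nth_uniq ?se //; lia.
  by rewrite xpair_eqE (negbTE ne).
have H1s : forall w b, (sg w == Some b) = [exists i : 'I_k, (i < p) && ~~ odd i && (t0 i == inl (w, b))].
  move=> w b; apply/eqP/existsP.
    move=> sw; have wA : w \in assigned sg by rewrite inE sw.
    have qa : index w e < a by rewrite -se index_mem mem_enum.
    have lt : (index w e).*2 < k by lia.
    exists (Ordinal lt); rewrite /= ffunE inl_eq /Bl1 /=.
    rewrite doubleK odd_double nth_index ?mem_enum // /vl sw eqxx andbT.
    apply/andP; split; [rewrite /p; lia | by []].
  move=> [i /andP [/andP [ip oi]]]; rewrite ffunE inl_eq /Bl1 (negbTE oi) => /eqP [<- <-].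
  apply: inA; rewrite /p in ip; lia.
pose B1 : ktuple k (vert (gunion (LCN f) (LCN g))) := inl_tuple (vert (LCN g)) t0.
have [s0 Hs0] : exists s0, @kwl_eq bool (gunion (LCN f) (LCN g)) k L (inr_tuple (vert (LCN f)) s0) B1.
  have : 0 < #|[set t | @kwl_eq bool (gunion (LCN f) (LCN g)) k L (inl_tuple (vert (LCN g)) t) B1]|.
    by apply/card_gt0P; exists t0; rewrite inE kwl_refl.
  by rewrite balance => /card_gt0P [s0]; rewrite inE; exists s0.
have HB := kwl_sym Hs0.
have Hat := kwl_atp HB.
have PAs := PA_transfer Hat PAt.
have PBs := PB_transfer Hat PBt.
have pk : p <= k by lia.
exists (tauof p s0).
apply: (not_dist HL k3 njj pj pjj HB _ _ balance).
- by move=> i _; rewrite ffunE.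
- by move=> i _; rewrite ffunE.
move=> [x|y] /=.
  rewrite (Lab pk pev PAt H1s) /F /Fg /=.
  have E1 : forall P : 'I_k -> bool, [exists i, P i && (B1 i == inl x)] = [exists i, P i && (t0 i == x)].
    by move=> P; apply: eq_existsb => i; rewrite ffunE inl_eq.
  by rewrite !E1.
rewrite (Lab pk pev PAs (tauof_H1 PBs)) /F /Fg /=.
have E1 : forall P : 'I_k -> bool, [exists i, P i && (inr_tuple (vert (LCN f)) s0 i == inr y)] = [exists i, P i && (s0 i == y)].
  by move=> P; apply: eq_existsb => i; rewrite ffunE inr_eq.
by rewrite !E1.
Qed.
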